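(* Let $q\ge2$, $A\in\mathbb{R}_{\geq0}^{q\times q}$, and let $V$ be the value of the one-shot two-player zero-sum game defined by $A$. Then there exists a randomized algorithm $R$ without advice for the repeated matrix game with cost matrix $A$ such that $\mathbb{E}[R(\sigma)]\leq Vn$ for every input $\sigma$ of length $n$. Furthermore, there exists a deterministic algorithm $\mathrm{ALG}$ reading $\lceil\log_2 q\rceil$ bits of advice such that $\mathrm{ALG}(\sigma)\leq Vn$ for every input $\sigma$ of length $n$.
   Context: The one-shot game defined by $A$: the row player picks $x\in[q]$, the column player picks $y\in[q]$, and the column player pays $A(x,y)$; $V=\max_\mu\min_\nu\mathbb{E}_{x\sim\mu,y\sim\nu}A(x,y)$ over mixed strategies. The repeated matrix game with cost matrix $A$: inputs $\sigma=(n,x_1,\dots,x_n)$ with $x_i\in[q]$; in round $i$ the algorithm learns $n$ (if $i=1$) or $x_{i-1}$ (if $i>1$) and answers $y_i\in[q]$ depending only on $n,x_1,\dots,x_{i-1}$ (and advice/randomness); cost $\sum_{i}A(x_i,y_i)$; $n$ is called the length. Advice is read from an infinite tape prepared by an oracle knowing the whole input. *)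

(* Defs.v *)
From HB Require Import structures.
From mathcomp Require Import all_boot all_order all_algebra.
From mathcomp Require Import classical_sets reals.
Set Implicit Arguments. Unset Strict Implicit. Unset Printing Implicit Defensive.
Import Order.TTheory GRing.Theory Num.Theory.
Local Open Scope ring_scope.
Local Open Scope classical_set_scope.

Section Defs.
Variables (R : realType) (q : nat).

Definition mixed (mu : {ffun 'I_q -> R}) : Prop :=
  (forall i, 0 <= mu i) /\ \sum_i mu i = 1.

Definition payoff (A : 'M[R]_q) (mu nu : {ffun 'I_q -> R}) : R :=
  \sum_x \sum_y mu x * nu y * A x y.

Definition game_value (A : 'M[R]_q) : R :=
  sup ((fun mu => inf ((fun nu => payoff A mu nu) @` [set nu | mixed nu]))
         @` [set mu | mixed mu]).

(** Deterministic online algorithm without advice: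
    y_i = alg n [x_1; ...; x_{i-1}]. *)
Definition det_alg := nat -> seq 'I_q -> 'I_q.

Definition cost (A : 'M[R]_q) (alg : det_alg) (n : nat) (xs : n.-tuple 'I_q) : R :=
  \sum_(i < n) A (tnth xs i) (alg n (take i xs)).

(** Randomized algorithm without advice: a probability distribution
    (over a finite sample space) on deterministic algorithms. *)
Record rand_alg := RandAlg {
  ra_space : finType;
  ra_prob : ra_space -> R;
  ra_det : ra_space -> det_alg;
  ra_prob_ge0 : forall w, 0 <= ra_prob w;
  ra_prob_sum : \sum_(w : ra_space) ra_prob w = 1 }.

Definition exp_cost (A : 'M[R]_q) (RA : rand_alg) (n : nat) (xs : n.-tuple 'I_q) : R :=
  \sum_(w : ra_space RA) ra_prob w * cost A (ra_det w) xs.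

(** Deterministic algorithm with advice read from an infinite tape. *)
Definition adv_alg := (nat -> bool) -> det_alg.

Definition reads_at_most (b : nat) (alg : adv_alg) : Prop :=
  forall t t' : nat -> bool, (forall k, (k < b)%N -> t k = t' k) -> alg t = alg t'.

End Defs.

(* Main.v *)
Require Import Defs.
From HB Require Import structures.
From mathcomp Require Import all_boot all_order all_algebra.
From mathcomp Require Import classical_sets reals.
From mathcomp Require Import ring lra zify.
Set Implicit Arguments. Unset Strict Implicit. Unset Printing Implicit Defensive.
Import Order.TTheory GRing.Theory Num.Theory.
Local Open Scope ring_scope.

Section Alt.
Variable R : realFieldType.

Lemma maxex (I : finType) (P : pred I) (f : I -> R) : exists t : R,
  [/\ 0 <= t, (forall k, P k -> f k <= t) &
     (forall b, 0 <= b -> (forall k, P k -> f k <= b) -> t <= b)].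
Proof.
exists (\big[Num.max/0]_(k | P k) Num.max 0 (f k)); split.
- apply: (big_ind (fun x : R => 0 <= x)) => //.
  + by move=> x y; rewrite le_max => ->.
  + by move=> k _; rewrite le_max lexx.
- move=> k Pk; rewrite (bigD1 k) //= le_max; apply/orP; left.
  by rewrite le_max lexx orbT.
- move=> b b0 H; apply: (big_ind (fun x : R => x <= b)) => //.
  + by move=> x y; rewrite ge_max => -> ->.
  + by move=> k Pk; rewrite ge_max b0 H.
Qed.


Lemma ar1 (a b x y : R) : 0 < a -> b < 0 -> x / a - y / b <= 0 -> y / - b <= - x / a.
Proof. by move=> ha hb h; rewrite invrN mulrN mulNr; lra. Qed.

Lemma ar2 (a S t : R) : 0 < a -> t <= - S / a -> S + a * t <= 0.
Proof. by move=> ha; rewrite ler_pdivlMr // => h; nra. Qed.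

Lemma ar3 (a S t : R) : a < 0 -> S <= t * - a -> S + a * t <= 0.
Proof. by move=> ha h; nra. Qed.

Lemma alt n : forall (I : finType) (A : I -> 'I_n -> R),
  (exists nu : 'I_n -> R, [/\ forall j, 0 <= nu j, \sum_j nu j = 1 &
      forall i, \sum_j A i j * nu j <= 0])
  \/ (exists mu : I -> R, (forall i, 0 <= mu i) /\
      forall j, 1 <= \sum_i mu i * A i j).
Proof.
elim: n => [|n IH] I A.
  by right; exists (fun _ => 0); split => // -[].
pose c := @ord_max n.
case: (boolP [forall i, A i c <= 0]) => [/forallP Hc|].
  left; exists (fun j => if j == c then 1 else 0); split.
  - by move=> j; case: ifP.
  - by rewrite (bigD1 c) //= eqxx big1 ?addr0 // => j /negbTE ->.
  - move=> i; rewrite (bigD1 c) //= eqxx mulr1 big1 ?addr0 // => j /negbTE ->.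
    by rewrite mulr0.
rewrite negb_forall => /existsP [p0]; rewrite -ltNge => Hp0.
pose W (j : 'I_n) := widen_ord (leqnSn n) j.
have Wl : forall j, widen_ord (leqnSn n) j = lift c j.
  by move=> j; apply/val_inj; rewrite /= /bump leqNgt ltn_ord.
pose Bf (r : (I + I * I)%type) (j : 'I_n.+1) : R :=
  match r with
  | inl i => if 0 <= A i c then A i j else 0
  | inr p => if (0 < A p.1 c) && (A p.2 c < 0)
             then A p.1 j / A p.1 c - A p.2 j / A p.2 c else 0
  end.
case: (IH (I + I * I)%type (fun r j => Bf r (W j))) => [[nu' [nu0 nu1 nuB]]|].
  pose S k := \sum_j A k (W j) * nu' j.
  have [t [t0 tge tle]] := maxex (fun k => A k c < 0) (fun k => S k / - A k c).
  pose F j := if unlift c j is Some j' then nu' j' else t.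
  have sumF : forall G : 'I_n.+1 -> R,
      \sum_j G j * F j = \sum_(j < n) G (W j) * nu' j + G c * t.
    move=> G; rewrite big_ord_recr /=; congr (_ + _).
      apply: eq_bigr => j _. have E : unlift c (widen_ord (leqnSn n) j) = Some j by rewrite Wl liftK.
      by rewrite /F E.
    by rewrite /F unlift_none.
  have t1 : 0 < 1 + t by lra.
  left; exists (fun j => F j / (1 + t)); split.
  - move=> j; apply: divr_ge0 => //; last exact: ltW.
    by rewrite /F; case: unlift.
  - rewrite -mulr_suml -[\sum_j F j]/(\sum_j F j) .
    have := sumF (fun _ => 1); under eq_bigr do rewrite mul1r.
    move=> ->; under eq_bigr do rewrite mul1r.
    by rewrite nu1 mul1r divff // lt0r_neq0.
  - move=> i.
    rewrite (eq_bigr (fun j => A i j * F j / (1 + t))); last first.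
      by move=> j _; rewrite mulrA.
    rewrite -mulr_suml sumF; apply: mulr_le0_ge0; last by rewrite invr_ge0 ltW.
    rewrite -/(S i).
    have Sle : forall k, 0 <= A k c -> S k <= 0.
      move=> k hk; have := nuB (inl k); rewrite /= hk.
      by rewrite /S.
    case: (ltrgtP (A i c) 0) => hi.
    + have := tge i hi; rewrite ler_pdivrMr; last by rewrite oppr_gt0.
      exact: ar3.
    + have hu : t <= - S i / A i c.
        apply: tle.
          by rewrite divr_ge0 ?(ltW hi) // oppr_ge0 Sle // ltW.
        move=> k hk; have := nuB (inr (i, k)); rewrite /= hi hk /=.
        have E : \sum_(j < n) (A i (W j) / A i c - A k (W j) / A k c) * nu' j
                 = S i / A i c - S k / A k c.
          rewrite /S !mulr_suml -sumrB; apply: eq_bigr => j _.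
          by rewrite mulrBl; ring.
        by rewrite E; apply: ar1.
      exact: ar2.
    + by rewrite hi mul0r addr0 Sle // hi.
move=> [muB [muB0 muB1]].
pose t2 i k := if (0 < A i c) && (A k c < 0) then muB (inr (i, k)) / A i c else 0.
pose t3 i k := if (0 < A k c) && (A i c < 0) then muB (inr (k, i)) / - A i c else 0.
pose t1 i := if 0 <= A i c then muB (inl i) else 0.
pose mu i := t1 i + \sum_k t2 i k + \sum_k t3 i k.
have key : forall j, \sum_i mu i * A i j = \sum_r muB r * Bf r j.
  move=> j; rewrite big_sumType /=.
  transitivity (\sum_i (t1 i * A i j) +
     (\sum_i \sum_k t2 i k * A i j + \sum_i \sum_k t3 i k * A i j)).
    rewrite -!big_split /=; apply: eq_bigr => i _.
    by rewrite /mu !mulrDl !mulr_suml addrA.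
  congr (_ + _).
    by apply: eq_bigr => i _; rewrite /t1 /=; case: ifP => _; rewrite ?mul0r ?mulr0.
  transitivity (\sum_i \sum_k muB (inr (i, k)) * (if (0 < A i c) && (A k c < 0)
       then A i j / A i c - A k j / A k c else 0)); last by rewrite pair_bigA; apply: eq_bigr => -[i k].
  rewrite [X in _ + X]exchange_big -big_split; apply: eq_bigr => i _.
  rewrite -big_split; apply: eq_bigr => k _ /=.
  rewrite /t2 /t3; case: ifP => [/andP [h1 h2]|_]; last by rewrite !mul0r mulr0 addr0.
  rewrite invrN; ring.
have mu0 : forall i, 0 <= mu i.
  move=> i; rewrite /mu; apply: addr_ge0; first apply: addr_ge0.
  - by rewrite /t1; case: ifP.
  - apply: sumr_ge0 => k _; rewrite /t2; case: ifP => // /andP [h _].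
    by rewrite divr_ge0 // ltW.
  - apply: sumr_ge0 => k _; rewrite /t3; case: ifP => // /andP [_ h].
    by rewrite divr_ge0 // oppr_ge0 ltW.
have keyc : 0 <= \sum_i mu i * A i c.
  rewrite key; apply: sumr_ge0 => -[i|[i k]] _; apply: mulr_ge0 => //=.
    by case: ifP.
  case: ifP => // /andP [h1 h2].
  by rewrite divff ?lt0r_neq0 // divff ?ltr0_neq0 // subrr.
have keyW : forall j, 1 <= \sum_i mu i * A i (W j).
  by move=> j; rewrite key; apply: muB1.
pose K := 1 + \sum_(j < n) `|A p0 (W j)| / A p0 c.
have K0 : 0 <= K.
  rewrite /K; apply: addr_ge0 => //; apply: sumr_ge0 => j _.
  by rewrite divr_ge0 // ltW.
right; exists (fun i => K * mu i + (if i == p0 then (A p0 c)^-1 else 0)); split.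
  move=> i; apply: addr_ge0; first exact: mulr_ge0.
  by case: ifP => // _; rewrite invr_ge0 ltW.
move=> j.
rewrite (eq_bigr (fun i => K * (mu i * A i j) +
            (if i == p0 then (A p0 c)^-1 else 0) * A i j)); last first.
  by move=> i _; rewrite mulrDl mulrA.
rewrite big_split /= -mulr_sumr [X in _ + X](bigD1 p0) //= eqxx.
rewrite [X in _ + (_ + X)]big1 ?addr0; last by move=> i /negbTE ->; rewrite mul0r.
case: (unliftP c j) => [j' ->|->].
  rewrite -Wl -/(W j').
  have h1 := keyW j'.
  have h2 : K * 1 <= K * \sum_i mu i * A i (W j') by apply: ler_wpM2l.
  have h3 : `|A p0 (W j')| / A p0 c <= \sum_(j < n) `|A p0 (W j)| / A p0 c.
    rewrite (bigD1 j') //= lerDl; apply: sumr_ge0 => j2 _.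
    by rewrite divr_ge0 // ltW.
  have h4 : - A p0 (W j') / A p0 c <= `|A p0 (W j')| / A p0 c.
    apply: ler_wpM2r; first by rewrite invr_ge0 ltW.
    by rewrite -normrN ler_norm.
  rewrite mulNr in h4.
  rewrite /K in h2 h3 *; rewrite mulr1 in h2.
  rewrite mulrC. lra.
have h2 : 0 <= K * \sum_i mu i * A i c by apply: mulr_ge0.
rewrite mulVf ?lt0r_neq0 //; lra.
Qed.

End Alt.

Lemma encode b : forall y, (y < 2 ^ b)%N ->
  exists t : nat -> bool, (\sum_(k < b) t k * 2 ^ k)%N = y.
Proof.
elim: b => [|b IH] y hy.
  by exists (fun _ => false); rewrite big_ord0; move: hy; rewrite expn0; lia.
case: (ltnP y (2 ^ b)) => h.
  have [t ht] := IH y h.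
  exists (fun k => if k == b then false else t k).
  rewrite big_ord_recr /= eqxx mul0n addn0 -ht; apply: eq_bigr => i _.
  by rewrite /= ltn_eqF.
have h2 : (y - 2 ^ b < 2 ^ b)%N by move: hy; rewrite expnS; lia.
have [t ht] := IH _ h2.
exists (fun k => if k == b then true else t k).
rewrite big_ord_recr /= eqxx mul1n.
rewrite (eq_bigr (fun i : 'I_b => t i * 2 ^ i)%N); last first.
  by move=> i _; rewrite /= ltn_eqF.
by rewrite ht subnK.
Qed.

Local Open Scope classical_set_scope.

Section Game.
Variables (R : realType) (q : nat) (A : 'M[R]_q).
Hypothesis hA : forall x y, 0 <= A x y.

Lemma mixed_le1 (mu : {ffun 'I_q -> R}) : mixed mu -> forall x, mu x <= 1.
Proof.
move=> [h0 h1] x; rewrite -h1 (bigD1 x) //= lerDl.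
by apply: sumr_ge0 => i _.
Qed.

Let M := \sum_x \sum_y A x y.
Local Notation FF := {ffun 'I_q -> R}.

Lemma payoff_ge0 (mu nu : FF) : mixed mu -> mixed nu -> 0 <= payoff A mu nu.
Proof.
move=> [m0 _] [n0 _]; apply: sumr_ge0 => x _; apply: sumr_ge0 => y _.
by rewrite !mulr_ge0.
Qed.

Lemma payoff_leM (mu nu : FF) : mixed mu -> mixed nu -> payoff A mu nu <= M.
Proof.
move=> hm hn; apply: ler_sum => x _; apply: ler_sum => y _.
have := mixed_le1 hm x; have := mixed_le1 hn y.
have := hm.1 x; have := hn.1 y; have := hA x y.
move=> a0 n0 m0 n1 m1.
have : mu x * nu y <= 1 by rewrite -(mulr1 1); apply: ler_pM.
move=> h; rewrite -[X in _ <= X]mul1r; exact: ler_wpM2r.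
Qed.

Definition innerset (mu : {ffun 'I_q -> R}) := (fun nu => payoff A mu nu) @` [set nu : {ffun 'I_q -> R} | mixed nu].

Lemma inner_lb (mu : FF) : has_lbound (innerset mu) -> forall nu : FF, mixed nu -> inf (innerset mu) <= payoff A mu nu.
Proof. by move=> hl nu hn; apply: ge_inf => //; exists nu. Qed.

Lemma mixed_ex : (0 < q)%N -> exists nu : FF, mixed nu.
Proof.
move=> hq; pose y0 := Ordinal hq.
exists [ffun y => if y == y0 then 1 else 0]; split.
  by move=> y; rewrite ffunE; case: ifP.
rewrite (bigD1 y0) //= ffunE eqxx big1 ?addr0 // => y hy.
by rewrite ffunE (negbTE hy).
Qed.

Lemma V_ge (hq : (0 < q)%N) (mu : FF) : mixed mu -> inf (innerset mu) <= game_value A.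
Proof.
move=> hm.
have hl : forall mu' : FF, mixed mu' -> has_lbound (innerset mu').
  move=> mu' hm'; exists 0 => r [nu hn <-]; exact: payoff_ge0.
apply: ub_le_sup; last by exists mu.
exists M => r [mu' hm' <-].
have [nu hn] := mixed_ex hq.
apply: le_trans (inner_lb (hl _ hm') hn) _.
exact: payoff_leM.
Qed.

Lemma inf_geP (hq : (0 < q)%N) (mu : FF) c : (forall nu : FF, mixed nu -> c <= payoff A mu nu) ->
  c <= inf (innerset mu).
Proof.
move=> h; apply: lb_le_inf.
  by have [nu hn] := mixed_ex hq; exists (payoff A mu nu); exists nu.
by move=> r [nu hn <-]; apply: h.
Qed.

Lemma minimax (hq : (0 < q)%N) : exists nu : 'I_q -> R,
  [/\ forall j, 0 <= nu j, \sum_j nu j = 1 &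
      forall x, \sum_y A x y * nu y <= game_value A].
Proof.
set V := game_value A.
case: (alt (fun x y => A x y - V)) => [[nu [h0 h1 h2]]|[mu [m0 m1]]].
  exists nu; split => // x; have := h2 x.
  under eq_bigr do rewrite mulrBl.
  by rewrite sumrB -mulr_sumr h1 mulr1 subr_le0.
exfalso.
pose y0 := Ordinal hq.
set s := \sum_x mu x.
have s0 : 0 <= s by apply: sumr_ge0.
have sne : s != 0.
  apply/negP => /eqP hs.
  have := m1 y0; rewrite big1 ?ler10 // => x _.
  have /psumr_eq0P hz := hs; rewrite hz ?mul0r //.
have sp : 0 < s by rewrite lt_neqAle eq_sym sne.
pose muh := [ffun x => mu x / s].
have hmh : mixed muh.
  split; first by move=> x; rewrite ffunE divr_ge0.
  under eq_bigr do rewrite ffunE.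
  by rewrite -mulr_suml divff.
have col : forall y, 1 + V * s <= \sum_x mu x * A x y.
  move=> y; have := m1 y.
  under eq_bigr do rewrite mulrBr.
  rewrite sumrB -mulr_suml -/s; lra.
have key : V + s^-1 <= inf (innerset muh).
  apply: inf_geP => // nu [n0 n1].
  rewrite /payoff exchange_big /=.
  have e : forall y, \sum_x muh x * nu y * A x y = nu y * ((\sum_x mu x * A x y) / s).
    move=> y; rewrite mulr_suml mulr_sumr; apply: eq_bigr => x _.
    by rewrite ffunE; ring.
  under eq_bigr do rewrite e.
  have -> : V + s^-1 = \sum_y nu y * ((1 + V * s) / s).
    by rewrite -mulr_suml n1 mul1r mulrDl mul1r mulfK // addrC.
  apply: ler_sum => y _; apply: ler_wpM2l => //.
  by apply: ler_wpM2r; [rewrite invr_ge0|apply: col].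
have := V_ge hq hmh.
have : 0 < s^-1 by rewrite invr_gt0.
rewrite -/V; lra.
Qed.

End Game.

Theorem theorem8 (R : realType) (q : nat) (A : 'M[R]_q) :
  (2 <= q)%N -> (forall x y, 0 <= A x y) ->
  (exists RA : rand_alg R q,
     forall (n : nat) (xs : n.-tuple 'I_q),
       exp_cost A RA xs <= game_value A * n%:R) /\
  (exists alg : adv_alg q,
     reads_at_most (up_log 2 q) alg /\
     forall (n : nat) (xs : n.-tuple 'I_q),
       exists advice : nat -> bool, cost A (alg advice) xs <= game_value A * n%:R).
Proof.
move=> hq2 hA.
have hq : (0 < q)%N by apply: leq_trans hq2.
have [nu [h0 h1 h2]] := minimax hA hq.
set V := game_value A.
pose RA := @RandAlg R q 'I_q nu (fun y _ _ => y) h0 h1.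
have costc : forall y n (xs : n.-tuple 'I_q),
    cost A (fun _ _ => y) xs = \sum_(i < n) A (tnth xs i) y by [].
have avg : forall n (xs : n.-tuple 'I_q),
    \sum_y nu y * \sum_(i < n) A (tnth xs i) y <= V * n%:R.
  move=> n xs.
  under eq_bigr do rewrite mulr_sumr.
  rewrite exchange_big /=.
  rewrite -[n in n%:R]card_ord -sumr_const mulr_sumr.
  apply: ler_sum => i _; rewrite mulr1.
  by under eq_bigr do rewrite mulrC; apply: h2.
split.
  by exists RA => n xs; apply: avg.
pose b := up_log 2 q.
pose y0 := Ordinal hq.
pose decode (t : nat -> bool) : 'I_q := insubd y0 (\sum_(k < b) t k * 2 ^ k)%N.
exists (fun t => fun _ _ => decode t); split.
  move=> t t' ht; rewrite /decode (_ : (\sum_(k < b) t k * 2 ^ k)%N =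
                                    (\sum_(k < b) t' k * 2 ^ k)%N) //.
  by apply: eq_bigr => k _; rewrite ht.
move=> n xs.
have [y hy] : exists y, \sum_(i < n) A (tnth xs i) y <= V * n%:R.
  case: (boolP [exists y, \sum_(i < n) A (tnth xs i) y <= V * n%:R]).
    by move=> /existsP [y hy]; exists y.
  rewrite negb_exists => /forallP hall; exfalso.
  have hlt : forall y, V * n%:R < \sum_(i < n) A (tnth xs i) y.
    by move=> y; have := hall y; rewrite -ltNge.
  have hs : \sum_y (nu y * \sum_(i < n) A (tnth xs i) y - nu y * (V * n%:R)) <= 0.
    by rewrite sumrB -mulr_suml h1 mul1r subr_le0; exact: avg n xs.
  have hz : forall y, true -> 0 <= nu y * \sum_(i < n) A (tnth xs i) y - nu y * (V * n%:R).
    move=> y _; rewrite -mulrBr mulr_ge0 // subr_ge0 ltW //.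
  have h0s : \sum_y (nu y * \sum_(i < n) A (tnth xs i) y - nu y * (V * n%:R)) = 0.
    by apply/eqP; rewrite eq_le hs sumr_ge0.
  have := psumr_eq0P hz h0s.
  move=> hall0.
  have : \sum_y nu y = 0.
    apply: big1 => y _; have := hall0 y isT.
    rewrite -mulrBr => /eqP; rewrite mulf_eq0 subr_eq0 => /orP [/eqP //|/eqP he].
    by have := hlt y; rewrite he ltxx.
  by rewrite h1 => /eqP; rewrite oner_eq0.
have hyb : (y < 2 ^ b)%N.
  by apply: leq_trans (ltn_ord y) (up_logP _ _).
have [t ht] := encode hyb.
exists t.
have -> : decode t = y.
  by apply: val_inj; rewrite /decode ht insubdK //; apply: ltn_ord.
by rewrite costc.
Qed.
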